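(* Let $V$ be a finite set, $s,t\in V$, $d$ an $st$-separating semi-metric on $V$, and $A\subseteq V$ nonempty. Define $f_A^{\pm}:V\to\mathbb R^2$ by $f_A^{\pm}(v)=(f_A^{+}(v),f_A^{-}(v))$ where $f_A^{\sigma}(v)=\tfrac12\left[d(v,s)+\sigma\, d(v,A)\right]$ for $\sigma\in\{+1,-1\}$ and $d(v,A)=\min_{a\in A}d(v,a)$. Then $f_A^{\pm}$ is $st$-sandwiching, i.e. for each $\sigma\in\{+1,-1\}$ and every $v\in V$, $f_A^{\sigma}(s)\le f_A^{\sigma}(v)\le f_A^{\sigma}(t)$.
   Context: A semi-metric on $V$ is a symmetric map $d:V\times V\to\mathbb R_{\ge0}$ with $d(v,v)=0$ satisfying the triangle inequality; it is $st$-separating if $d(s,t)=d(s,v)+d(v,t)$ for all $v\in V$. *)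

(* Defs.v *)
From mathcomp Require Import all_boot all_order all_algebra.
From mathcomp Require Import reals.
Set Implicit Arguments. Unset Strict Implicit. Unset Printing Implicit Defensive.
Import Order.TTheory GRing.Theory Num.Theory.
Local Open Scope ring_scope.

Definition semi_metric (R : realType) (V : finType) (d : V -> V -> R) : Prop :=
  [/\ forall u v, 0 <= d u v,
      forall u v, d u v = d v u,
      forall v, d v v = 0
    & forall u v w, d u w <= d u v + d v w].

Definition st_separating (R : realType) (V : finType) (d : V -> V -> R) (s t : V) : Prop :=
  forall v, d s t = d s v + d v t.

(* d(v,A) = min_{a in A} d(v,a), for nonempty A (value for empty A is irrelevant: 0). *)
Definition dist_set (R : realType) (V : finType) (d : V -> V -> R) (v : V) (A : {set V}) : R :=
  match [pick a in A] with
  | Some a0 => d v (Order.arg_min a0 (fun a => a \in A) (d v))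
  | None => 0
  end.

Definition fA (R : realType) (V : finType) (d : V -> V -> R) (s : V) (A : {set V})
  (sigma : bool) (v : V) : R :=
  (d v s + (if sigma then 1 else -1) * dist_set d v A) / 2.

(* A map f : V -> R^2 (given as its two coordinates) is st-sandwiching. *)
Definition st_sandwiching (R : realType) (V : finType) (f : bool -> V -> R) (s t : V) : Prop :=
  forall sigma v, f sigma s <= f sigma v /\ f sigma v <= f sigma t.

(* Main.v *)
Require Import Defs.
From mathcomp Require Import all_boot all_order all_algebra.
From mathcomp Require Import reals.
From mathcomp Require Import lra.
Import Order.TTheory GRing.Theory Num.Theory.
Local Open Scope ring_scope.

Lemma distP (R : realType) (V : finType) (d : V -> V -> R) (A : {set V}) v :
  A != set0 -> exists2 a, a \in A & dist_set d v A = d v a /\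
     forall b, b \in A -> dist_set d v A <= d v b.
Proof.
move=> An; rewrite /dist_set; case: pickP => [a0 Ha0|H].
  case: (@Order.TotalTheory.arg_minP _ R V a0 (fun a => a \in A) (d v) Ha0).
  move=> i iA Hi; exists i => //; split => // b bA; exact: Hi.
exfalso; move/set0Pn: An => [x xA]; by rewrite H in xA.
Qed.

Lemma dist_lip (R : realType) (V : finType) (d : V -> V -> R) (A : {set V}) u v :
  semi_metric d -> A != set0 -> dist_set d u A <= d u v + dist_set d v A.
Proof.
move=> [_ _ _ tri] An.
have [a aA [-> _]] := distP _ _ d A v An.
have [b bA [_ Hb]] := distP _ _ d A u An.
exact: le_trans (Hb a aA) (tri u v a).
Qed.

Theorem proposition2p10 (R : realType) (V : finType) (s t : V) (d : V -> V -> R)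
  (A : {set V}) :
  semi_metric d -> st_separating d s t -> A != set0 ->
  st_sandwiching (fA d s A) s t.
Proof.
move=> sm sep An sigma v; rewrite /fA.
have [pos sym refl _] := sm.
have h1 := dist_lip _ _ d A v s sm An.
have h2 := dist_lip _ _ d A s v sm An.
have h3 := dist_lip _ _ d A v t sm An.
have h4 := dist_lip _ _ d A t v sm An.
have e := sep v.
have p1 := pos v s.
rewrite (sym v s) (sym t s) refl; rewrite (sym v t) in h3.
rewrite (sym s v) in h2.
split; case: sigma => /=; rewrite ?mul1r ?mulN1r; have q1 := sym v s; have q2 := sym t v; lra.
Qed.
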